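(* Let $\beta>2$. There is an absolute constant $C<\infty$ such that for every integer $N\ge1$, every $\theta\in[0,\pi)$ and every $K\ge1$ with $$\big|\{s\in\mathbb R: f^*_{N,\theta}(s)\ge K\}\big|\ge K^{-\beta},$$ one has $$\big|\operatorname{proj}_\theta(\mathcal G_{N\lceil K^\beta\rceil})\big|\le \frac{C}{K}.$$
   Context: For $n\ge 0$ and $\alpha\in\{-1,0,1\}^n$ let $z_\alpha=\sum_{k=1}^n 3^{-k}e^{i\pi(\frac12+\frac23\alpha_k)}$ and $\mathcal G_n=\bigcup_{\alpha\in\{-1,0,1\}^n}B(z_\alpha,3^{-n})$, $B(w,r)$ the open disc. $\operatorname{proj}_\theta(w)=\operatorname{Re}(we^{-i\theta})$. The projection multiplicity function is $f_{n,\theta}(s)=\#\{\alpha\in\{-1,0,1\}^n:\ |\operatorname{proj}_\theta(z_\alpha)-s|<3^{-n}\}$, and $f^*_{N,\theta}(s)=\max_{0\le n\le N}f_{n,\theta}(s)$. $|\cdot|$ is Lebesgue measure. *)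

(* Defs.v *)
From Stdlib Require Import Reals Lra Lia ZArith List.
Open Scope R_scope.

(* All sign vectors alpha in {-1,0,1}^n, as lists of length n (alpha_1 first). *)
Fixpoint alphas (n : nat) : list (list Z) :=
  match n with
  | O => nil :: nil
  | S m => flat_map (fun a => map (fun t => a :: t) (alphas m)) ((-1)%Z :: 0%Z :: 1%Z :: nil)
  end.

Definition ang (a : Z) : R := PI * (/2 + 2/3 * IZR a).

(* Real and imaginary parts of z_alpha = sum_{k=1}^n 3^{-k} e^{i ang(alpha_k)} *)
Fixpoint zre_from (k : nat) (al : list Z) : R :=
  match al with
  | nil => 0
  | a :: t => (/3) ^ k * cos (ang a) + zre_from (S k) t
  end.
Fixpoint zim_from (k : nat) (al : list Z) : R :=
  match al with
  | nil => 0
  | a :: t => (/3) ^ k * sin (ang a) + zim_from (S k) t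
  end.
Definition zre (al : list Z) : R := zre_from 1 al.
Definition zim (al : list Z) : R := zim_from 1 al.

(* proj_theta(x + i y) = Re((x+iy) e^{-i theta}) = x cos theta + y sin theta *)
Definition proj (theta x y : R) : R := x * cos theta + y * sin theta.

Definition fmult (n : nat) (theta s : R) : nat :=
  length (filter (fun al =>
    if Rlt_dec (Rabs (proj theta (zre al) (zim al) - s)) ((/3) ^ n) then true else false)
    (alphas n)).

Definition fstar (N : nat) (theta s : R) : nat :=
  fold_right Nat.max 0%nat (map (fun n => fmult n theta s) (seq 0 (S N))).

Definition inG (n : nat) (x y : R) : Prop :=
  exists al, In al (alphas n) /\
    (x - zre al) ^ 2 + (y - zim al) ^ 2 < ((/3) ^ n) ^ 2.

Definition projG (n : nat) (theta : R) (s : R) : Prop :=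
  exists x y, inG n x y /\ s = proj theta x y.

Definition ceilR (x : R) : Z := (- Int_part (- x))%Z.

(* Lebesgue (outer) measure via countable covers by open intervals. *)
Definition interval_cover (A : R -> Prop) (a b : nat -> R) : Prop :=
  (forall k, a k <= b k) /\ (forall s, A s -> exists k, a k < s < b k).

Definition measure_ge (A : R -> Prop) (m : R) : Prop :=
  forall a b L, interval_cover A a b ->
    infinite_sum (fun k => b k - a k) L -> m <= L.

Definition measure_le (A : R -> Prop) (m : R) : Prop :=
  forall eps, 0 < eps -> exists a b L, interval_cover A a b /\
    infinite_sum (fun k => b k - a k) L /\ L <= m + eps.

(* Main.v *)
Require Import Defs.
From Stdlib Require Import Reals Lra Lia ZArith List Bool ClassicalEpsilon Classical.
Open Scope R_scope.

Definition r (n : nat) : R := (/3) ^ n.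
Definition cp (th : R) (al : list Z) : R := proj th (zre al) (zim al).

Lemma r_pos n : 0 < r n.
Proof. unfold r; apply pow_lt; lra. Qed.

Lemma r_add a b : r (a + b) = r a * r b.
Proof. unfold r; apply pow_add. Qed.

Lemma r_S n : r (S n) = /3 * r n.
Proof. reflexivity. Qed.

Lemma r_le a b : (a <= b)%nat -> r b <= r a.
Proof.
  intros H. replace b with (a + (b - a))%nat by lia. rewrite r_add.
  assert (r (b - a) <= 1).
  { unfold r. induction (b - a)%nat; simpl; [lra|]. pose proof (pow_lt (/3) n ltac:(lra)). lra. }
  pose proof (r_pos a). nra.
Qed.

Lemma zre_from_S k t : zre_from (S k) t = /3 * zre_from k t.
Proof.
  revert k; induction t as [|a t IH]; intros k; simpl; [ring|].
  rewrite IH. ring.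
Qed.
Lemma zim_from_S k t : zim_from (S k) t = /3 * zim_from k t.
Proof.
  revert k; induction t as [|a t IH]; intros k; simpl; [ring|].
  rewrite IH. ring.
Qed.
Lemma zre_from_k k t : zre_from k t = (/3)^k * zre_from 0 t.
Proof. induction k; simpl; [ring|]. rewrite zre_from_S, IHk. ring. Qed.
Lemma zim_from_k k t : zim_from k t = (/3)^k * zim_from 0 t.
Proof. induction k; simpl; [ring|]. rewrite zim_from_S, IHk. ring. Qed.
Lemma zre_from_app k b d : zre_from k (b ++ d) = zre_from k b + zre_from (k + length b) d.
Proof.
  revert k; induction b as [|a b IH]; intros k; simpl.
  - rewrite Nat.add_0_r; ring.
  - rewrite IH. replace (S k + length b)%nat with (k + S (length b))%nat by lia. ring.
Qed.
Lemma zim_from_app k b d : zim_from k (b ++ d) = zim_from k b + zim_from (k + length b) d.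
Proof.
  revert k; induction b as [|a b IH]; intros k; simpl.
  - rewrite Nat.add_0_r; ring.
  - rewrite IH. replace (S k + length b)%nat with (k + S (length b))%nat by lia. ring.
Qed.
Lemma zre_app b d : zre (b ++ d) = zre b + r (length b) * zre d.
Proof.
  unfold zre. rewrite zre_from_app. rewrite (zre_from_k (1 + length b)), (zre_from_k 1 d).
  unfold r. simpl. ring.
Qed.
Lemma zim_app b d : zim (b ++ d) = zim b + r (length b) * zim d.
Proof.
  unfold zim. rewrite zim_from_app. rewrite (zim_from_k (1 + length b)), (zim_from_k 1 d).
  unfold r. simpl. ring.
Qed.
Lemma cp_app th b d : cp th (b ++ d) = cp th b + r (length b) * cp th d.
Proof. unfold cp, proj. rewrite zre_app, zim_app. ring. Qed.

Lemma proj_sq th x y : (proj th x y)^2 <= x^2 + y^2.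
Proof.
  unfold proj. pose proof (sin2_cos2 th). unfold Rsqr in H.
  assert (0 <= (x * sin th - y * cos th)^2) by apply pow2_ge_0. nra.
Qed.

Lemma cp_single th a : Rabs (cp th (a :: nil)) <= /3.
Proof.
  unfold cp, zre, zim; simpl.
  set (u := proj th (cos (ang a)) (sin (ang a))).
  assert (u^2 <= 1). { pose proof (proj_sq th (cos (ang a)) (sin (ang a))).
    pose proof (sin2_cos2 (ang a)). unfold Rsqr in H0. fold u in H. nra. }
  replace (proj th (/3 * 1 * cos (ang a) + 0) (/3 * 1 * sin (ang a) + 0)) with (/3 * u)
    by (unfold u, proj; ring).
  rewrite Rabs_mult, Rabs_right by lra.
  assert (Rabs u <= 1). { unfold Rabs; destruct Rcase_abs; nra. }
  nra.
Qed.

Lemma cp_bound th b : Rabs (cp th b) <= (1 - r (length b)) / 2.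
Proof.
  induction b as [|a b IH].
  - unfold cp, zre, zim, proj; simpl. replace (0 * cos th + 0 * sin th) with 0 by ring. rewrite Rabs_R0. unfold r; simpl; lra.
  - change (a :: b) with ((a :: nil) ++ b). rewrite cp_app. simpl length.
    pose proof (cp_single th a).
    eapply Rle_trans; [apply Rabs_triang|]. rewrite Rabs_mult, (Rabs_right (r 1)) by (left; apply r_pos).
    rewrite r_S. assert (r 0 = 1) by reflexivity. rewrite H0. pose proof (Rabs_pos (cp th b)). pose proof (r_pos (length b)). rewrite r_S; lra.
Qed.

Lemma nested th b d : Rabs (cp th (b ++ d) - cp th b) + r (length (b ++ d)) <= r (length b).
Proof.
  rewrite cp_app. replace (cp th b + r (length b) * cp th d - cp th b) with (r (length b) * cp th d) by ring.
  rewrite Rabs_mult, Rabs_right by (left; apply r_pos). rewrite length_app, r_add.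
  pose proof (cp_bound th d). pose proof (r_pos (length b)). pose proof (r_pos (length d)). pose proof (r_le 0 (length d) ltac:(lia)). assert (r 0 = 1) by reflexivity. nra.
Qed.

Definition digit (x : Z) : Prop := x = (-1)%Z \/ x = 0%Z \/ x = 1%Z.

Lemma in_alphas n g : In g (alphas n) <-> length g = n /\ Forall digit g.
Proof.
  revert g; induction n as [|n IH]; intros g; simpl.
  - split.
    + intros [<-|[]]. split; auto.
    + intros [H _]. destruct g; [auto|discriminate].
  - rewrite !app_nil_r. rewrite !in_app_iff, !in_map_iff. split.
    + intros [[x [Hg Hx]]|[[x [Hg Hx]]|[x [Hg Hx]]]]; subst g; apply IH in Hx as [Hl Hf];
        simpl; split; try lia; constructor; auto; unfold digit; auto.
    + intros [Hl Hf]. destruct g as [|a g]; [discriminate|]. inversion Hf; subst.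
      simpl in Hl. assert (In g (alphas n)) by (apply IH; split; auto; lia).
      destruct H1 as [E|[E|E]]; subst a; eauto 10.
Qed.

Lemma alphas_length n g : In g (alphas n) -> length g = n.
Proof. intros H; apply in_alphas in H; tauto. Qed.

Lemma Forall_firstn' {A} (P : A -> Prop) n l : Forall P l -> Forall P (firstn n l).
Proof. revert l; induction n; intros [|a l] H; simpl; auto. inversion H; subst; constructor; auto. Qed.
Lemma Forall_skipn' {A} (P : A -> Prop) n l : Forall P l -> Forall P (skipn n l).
Proof. revert l; induction n; intros [|a l] H; simpl; auto. inversion H; subst; auto. Qed.

Lemma alphas_firstn a b g : In g (alphas (a + b)) -> In (firstn a g) (alphas a).
Proof.
  rewrite !in_alphas. intros [Hl Hf]. split. rewrite length_firstn; lia. apply Forall_firstn'; auto.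
Qed.
Lemma alphas_skipn a b g : In g (alphas (a + b)) -> In (skipn a g) (alphas b).
Proof.
  rewrite !in_alphas. intros [Hl Hf]. split. rewrite length_skipn; lia. apply Forall_skipn'; auto.
Qed.

Definition cnt (n : nat) (P : list Z -> bool) : nat := length (filter P (alphas n)).

Lemma length_alphas n : length (alphas n) = (3 ^ n)%nat.
Proof.
  induction n; simpl; auto. rewrite !app_nil_r, !length_app, !length_map. lia.
Qed.

Lemma filter_map' {A B} (f : B -> bool) (g : A -> B) l :
  length (filter f (map g l)) = length (filter (fun x => f (g x)) l).
Proof. induction l; simpl; auto. destruct (f (g a)); simpl; auto. Qed.

Lemma cnt_S n P : cnt (S n) P =
  (cnt n (fun t => P ((-1)%Z :: t)) + cnt n (fun t => P (0%Z :: t)) + cnt n (fun t => P (1%Z :: t)))%nat.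
Proof.
  unfold cnt; simpl. rewrite !app_nil_r, !filter_app, !length_app, !filter_map'. lia.
Qed.

Lemma cnt_prod a b P Q :
  cnt (a + b) (fun g => P (firstn a g) && Q (skipn a g)) = (cnt a P * cnt b Q)%nat.
Proof.
  revert P; induction a as [|a IH]; intros P.
  - simpl. unfold cnt at 2; simpl. destruct (P nil); simpl.
    + unfold cnt; rewrite Nat.add_0_r; auto.
    + unfold cnt. induction (alphas b); simpl; auto.
  - simpl (S a + b)%nat. rewrite !cnt_S. simpl firstn. simpl skipn.
    rewrite (IH (fun t => P ((-1)%Z :: t))), (IH (fun t => P (0%Z :: t))), (IH (fun t => P (1%Z :: t))).
    lia.
Qed.

Lemma cnt_le n P : (cnt n P <= 3 ^ n)%nat.
Proof. unfold cnt. rewrite <- length_alphas. apply filter_length_le. Qed.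

Lemma filter_mono {A} (f g : A -> bool) l :
  (forall x, In x l -> f x = true -> g x = true) -> (length (filter f l) <= length (filter g l))%nat.
Proof.
  induction l as [|a l IH]; intros H; simpl; auto.
  destruct (f a) eqn:E1.
  - rewrite (H a (or_introl eq_refl) E1). simpl. apply le_n_S, IH; intros; apply H; simpl; auto.
  - destruct (g a); simpl; [apply le_S|]; apply IH; intros; apply H; simpl; auto.
Qed.

Lemma cnt_mono n f g : (forall x, In x (alphas n) -> f x = true -> g x = true) -> (cnt n f <= cnt n g)%nat.
Proof. apply filter_mono. Qed.

Lemma cnt_pos n f x : In x (alphas n) -> f x = true -> (1 <= cnt n f)%nat.
Proof.
  unfold cnt. induction (alphas n) as [|a l IH]; simpl; [tauto|]. intros [->|H] Hf.
  - rewrite Hf; simpl; lia.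
  - destruct (f a); simpl; [lia|auto].
Qed.

Lemma filter_or {A} (f g : A -> bool) l :
  (forall x, In x l -> f x = true -> g x = true -> False) ->
  length (filter (fun x => f x || g x) l) = (length (filter f l) + length (filter g l))%nat.
Proof.
  induction l as [|a l IH]; intros H; simpl; auto.
  assert (IH' := IH (fun x Hx => H x (or_intror Hx))).
  destruct (f a) eqn:E1, (g a) eqn:E2; simpl; try lia.
  exfalso; apply (H a); simpl; auto.
Qed.

Lemma filter_compl {A} (f : A -> bool) l :
  (length (filter f l) + length (filter (fun x => negb (f x)) l))%nat = length l.
Proof. induction l; simpl; auto. destruct (f a); simpl; lia. Qed.

Definition ltb (x y : R) : bool := if Rlt_dec x y then true else false.
Lemma ltb_true x y : ltb x y = true <-> x < y.
Proof. unfold ltb; destruct Rlt_dec; split; intros; auto; try discriminate; contradiction. Qed.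

Lemma fmult_cnt n th s : fmult n th s = cnt n (fun al => ltb (Rabs (cp th al - s)) (r n)).
Proof. reflexivity. Qed.

Definition W := (R * nat)%type.
Definition winb th (w : W) (d : list Z) : bool := ltb (Rabs (cp th (firstn (snd w) d) - fst w)) (r (snd w)).
Definition ball (w : W) (x : R) : Prop := Rabs (x - fst w) < 2 * r (snd w).
Definition big (w : W) (x : R) : Prop := Rabs (x - fst w) < 6 * r (snd w).
Definition disj (w w' : W) : Prop := forall x, ~ (ball w x /\ ball w' x).
Fixpoint pw (l : list W) : Prop :=
  match l with nil => True | w :: l' => Forall (disj w) l' /\ pw l' end.

Lemma cnt_true b : cnt b (fun _ => true) = (3 ^ b)%nat.
Proof. unfold cnt. rewrite <- length_alphas. induction (alphas b); simpl; auto. Qed.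

Lemma cnt_prefix a b P : cnt (a + b) (fun g => P (firstn a g)) = (cnt a P * 3 ^ b)%nat.
Proof.
  rewrite <- cnt_true, <- cnt_prod. unfold cnt. f_equal. apply filter_ext_in. intros; rewrite andb_true_r; auto.
Qed.

Lemma count_win th D w : (snd w <= D)%nat ->
  cnt D (winb th w) = (fmult (snd w) th (fst w) * 3 ^ (D - snd w))%nat.
Proof.
  intros H. destruct w as [t n]; simpl in *. unfold winb; simpl.
  replace D with (n + (D - n))%nat at 1 by lia.
  rewrite (cnt_prefix n (D - n) (fun al => ltb (Rabs (cp th al - t)) (r n))). reflexivity.
Qed.

Lemma win_disj th D w w' d : In d (alphas D) -> (snd w <= D)%nat -> (snd w' <= D)%nat ->
  disj w w' -> winb th w d = true -> winb th w' d = true -> False.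
Proof.
  assert (key : forall w w', In d (alphas D) -> (snd w <= D)%nat -> (snd w' <= D)%nat ->
    (snd w <= snd w')%nat -> disj w w' -> winb th w d = true -> winb th w' d = true -> False).
  { clear w w'. intros [t n] [t' n'] Hd H1 H2 Hle Hdisj Hw Hw'. simpl in *.
    unfold winb in Hw, Hw'; simpl in *. apply ltb_true in Hw, Hw'.
    apply alphas_length in Hd.
    set (x := cp th (firstn n' d)).
    assert (E : firstn n' d = firstn n d ++ skipn n (firstn n' d)).
    { rewrite <- (firstn_skipn n (firstn n' d)) at 1. rewrite firstn_firstn.
      replace (Init.Nat.min n n') with n by lia. auto. }
    pose proof (nested th (firstn n d) (skipn n (firstn n' d))). rewrite <- E in H.
    rewrite !length_firstn in H. replace (Init.Nat.min n' (length d)) with n' in H by lia.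
    replace (Init.Nat.min n (length d)) with n in H by lia.
    apply (Hdisj x). unfold ball; simpl. pose proof (r_pos n'). split.
    - fold x in H. pose proof (Rabs_triang (x - cp th (firstn n d)) (cp th (firstn n d) - t)).
      replace (x - cp th (firstn n d) + (cp th (firstn n d) - t)) with (x - t) in H3 by ring. lra.
    - fold x in Hw'. lra. }
  intros Hd H1 H2 Hdisj Hw Hw'.
  destruct (Nat.le_ge_cases (snd w) (snd w')) as [Hle|Hle].
  - exact (key w w' Hd H1 H2 Hle Hdisj Hw Hw').
  - apply (key w' w Hd H2 H1 Hle); auto. intros x [A B]; apply (Hdisj x); auto.
Qed.

Definition sumc th D (ws : list W) : nat :=
  fold_right (fun w acc => (fmult (snd w) th (fst w) * 3 ^ (D - snd w) + acc)%nat) 0%nat ws.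

Lemma count_union th D ws : pw ws -> Forall (fun w => (snd w <= D)%nat) ws ->
  cnt D (fun d => existsb (fun w => winb th w d) ws) = sumc th D ws.
Proof.
  induction ws as [|w ws IH]; intros Hp Hf; simpl.
  - unfold cnt. induction (alphas D); simpl; auto.
  - destruct Hp as [Hd Hp]. inversion Hf; subst. unfold cnt. rewrite filter_or.
    + fold (cnt D (winb th w)). rewrite count_win by auto.
      fold (cnt D (fun d => existsb (fun w => winb th w d) ws)). rewrite IH; auto.
    + intros d Hin Hw Hex. apply existsb_exists in Hex as [w' [Hw'in Hw']].
      rewrite Forall_forall in Hd, H2. eapply (win_disj th D w w' d); eauto.
Qed.

Definition interb (w w' : W) : bool :=
  ltb (Rabs (fst w - fst w')) (2 * r (snd w) + 2 * r (snd w')).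

Lemma min_exists0 (a : W) l : exists w0, In w0 (a :: l) /\ forall w', In w' (a :: l) -> (snd w0 <= snd w')%nat.
Proof.
  revert a; induction l as [|b l IH]; intros a.
  - exists a. split; [left; auto|]. intros w' [<-|[]]; lia.
  - destruct (IH b) as [w0 [Hin Hm]].
    destruct (Nat.le_ge_cases (snd a) (snd w0)).
    + exists a; split; [left; auto|]. intros w' [<-|H']; [lia|]. specialize (Hm w' H'); lia.
    + exists w0; split; [right; auto|]. intros w' [<-|H']; auto.
Qed.

Lemma filter_lt {A} (f : A -> bool) l x : In x l -> f x = false -> (length (filter f l) < length l)%nat.
Proof.
  induction l as [|a l IH]; simpl; [tauto|]. intros [->|H] Hf.
  - rewrite Hf. pose proof (filter_length_le f l). lia.
  - destruct (f a); simpl; [apply -> Nat.succ_lt_mono; auto|]. specialize (IH H Hf). lia.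
Qed.

Lemma vitali : forall l : list W, exists sel, incl sel l /\ pw sel /\
  forall w x, In w l -> ball w x -> exists w', In w' sel /\ big w' x.
Proof.
  intros l. remember (length l) as k eqn:Hk. revert l Hk.
  induction k as [k IHk] using (well_founded_induction lt_wf). intros l Hk.
  destruct l as [|w1 l1].
  - exists nil. split; [intros ? []|]. split; [simpl; auto|]. intros w x [].
  - destruct (min_exists0 w1 l1) as [w0 [Hw0 Hmin]].
    set (l' := filter (fun w => negb (interb w0 w)) (w1 :: l1)).
    assert (Hlt : (length l' < k)%nat).
    { subst k. apply (filter_lt _ _ w0); auto. unfold interb. simpl negb.
      assert (ltb (Rabs (fst w0 - fst w0)) (2 * r (snd w0) + 2 * r (snd w0)) = true).
      { apply ltb_true. unfold Rminus; rewrite Rplus_opp_r, Rabs_R0. pose proof (r_pos (snd w0)); lra. }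
      rewrite H; auto. }
    destruct (IHk _ Hlt l' eq_refl) as [sel [Hincl [Hpw Hcov]]].
    exists (w0 :: sel). split; [|split].
    + intros w [<-|H]; auto. apply Hincl in H. unfold l' in H. apply filter_In in H; tauto.
    + simpl. split; auto. apply Forall_forall. intros w Hw. apply Hincl in Hw.
      unfold l' in Hw. apply filter_In in Hw as [_ Hn]. unfold interb in Hn.
      destruct (ltb _ _) eqn:E; [discriminate|]. unfold ltb in E. destruct Rlt_dec; [discriminate|].
      intros x [B1 B2]. unfold ball in B1, B2.
      pose proof (Rabs_triang (fst w0 - x) (x - fst w)).
      replace (fst w0 - x + (x - fst w)) with (fst w0 - fst w) in H by ring.
      rewrite <- Rabs_Ropp in B1. replace (- (x - fst w0)) with (fst w0 - x) in B1 by ring. lra.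
    + intros w x Hw Hb. destruct (interb w0 w) eqn:E.
      * exists w0. split; [left; auto|]. unfold interb in E. apply ltb_true in E.
        unfold big. unfold ball in Hb. specialize (Hmin w Hw). pose proof (r_le _ _ Hmin).
        pose proof (Rabs_triang (x - fst w) (fst w - fst w0)).
        replace (x - fst w + (fst w - fst w0)) with (x - fst w0) in H0 by ring.
        rewrite <- Rabs_Ropp in E. replace (- (fst w0 - fst w)) with (fst w - fst w0) in E by ring. lra.
      * destruct (Hcov w x) as [w' [Hw' Hb']]; auto.
        unfold l'. apply filter_In. rewrite E; auto.
        exists w'; split; [right|]; auto.
Qed.

Definition good_at th K D (g : list Z) : Prop :=
  exists L t, (L <= D)%nat /\ Rabs (cp th (firstn L g) - t) < r L /\ K <= INR (fmult L th t).

Definition dec (P : Prop) : bool := if excluded_middle_informative P then true else false.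
Lemma dec_true P : dec P = true <-> P.
Proof. unfold dec; destruct excluded_middle_informative; split; auto; intros; try discriminate; contradiction. Qed.

Definition leqb (a b : list Z) : bool := if list_eq_dec Z.eq_dec a b then true else false.

Lemma inj_fmult th j L b t : In b (alphas j) ->
  (fmult L th t <= fmult (j + L) th (cp th b + r j * t))%nat.
Proof.
  intros Hb. apply alphas_length in Hb as Hl.
  set (G := fun al => ltb (Rabs (cp th al - t)) (r L)).
  assert (H1 : (1 <= cnt j (fun a => leqb a b))%nat).
  { apply (cnt_pos _ _ b). apply in_alphas; apply in_alphas in Hb; auto.
    unfold leqb; destruct list_eq_dec; auto. }
  assert (H2 : (cnt (j + L) (fun g => leqb (firstn j g) b && G (skipn j g)) <=
                fmult (j + L) th (cp th b + r j * t))%nat).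
  { rewrite fmult_cnt. apply cnt_mono. intros g Hg Hc. apply andb_prop in Hc as [E Hc].
    unfold leqb in E; destruct list_eq_dec as [E'|]; [|discriminate].
    unfold G in Hc. apply ltb_true in Hc. apply ltb_true.
    rewrite <- (firstn_skipn j g), E', cp_app, Hl, r_add.
    replace (cp th b + r j * cp th (skipn j g) - (cp th b + r j * t)) with (r j * (cp th (skipn j g) - t)) by ring.
    rewrite Rabs_mult, Rabs_right by (left; apply r_pos). apply Rmult_lt_compat_l; auto. apply r_pos. }
  rewrite (cnt_prod j L (fun a => leqb a b) G) in H2. rewrite fmult_cnt. fold G. nia.
Qed.

Lemma shift th K j D b g : In b (alphas j) -> good_at th K D g -> good_at th K (j + D) (b ++ g).
Proof.
  intros Hb [L [t [HL [Hd Hf]]]]. apply alphas_length in Hb as Hl.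
  exists (j + L)%nat, (cp th b + r j * t). split; [lia|]. split.
  - rewrite <- Hl at 1. rewrite firstn_app_2, cp_app, Hl, r_add.
    replace (cp th b + r j * cp th (firstn L g) - (cp th b + r j * t)) with (r j * (cp th (firstn L g) - t)) by ring.
    rewrite Rabs_mult, Rabs_right by (left; apply r_pos). apply Rmult_lt_compat_l; auto. apply r_pos.
  - eapply Rle_trans; [apply Hf|]. apply le_INR. apply inj_fmult; auto.
Qed.

Definition notsucc th K N (d : list Z) : bool := negb (dec (good_at th K N d)).

Fixpoint blocksOK th K N (m : nat) (g : list Z) : bool :=
  match m with
  | O => true
  | S m' => notsucc th K N (firstn N g) && blocksOK th K N m' (skipn N g)
  end.

Lemma cnt_blocks th K N m : cnt (N * m) (blocksOK th K N m) = (cnt N (notsucc th K N) ^ m)%nat.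
Proof.
  induction m as [|m IH].
  - rewrite Nat.mul_0_r. unfold cnt; simpl. reflexivity.
  - replace (N * S m)%nat with (N + N * m)%nat by lia. simpl blocksOK.
    rewrite cnt_prod, IH. simpl. reflexivity.
Qed.

Lemma blocks_good th K N m g : In g (alphas (N * m)) -> blocksOK th K N m g = false ->
  good_at th K (N * m) g.
Proof.
  revert g; induction m as [|m IH]; intros g Hg Hb; simpl in Hb; [discriminate|].
  replace (N * S m)%nat with (N + N * m)%nat in * by lia.
  pose proof (alphas_firstn _ _ _ Hg) as Hf. pose proof (alphas_skipn _ _ _ Hg) as Hs.
  apply andb_false_iff in Hb as [Hb|Hb].
  - unfold notsucc in Hb. apply negb_false_iff in Hb. apply (proj1 (dec_true _)) in Hb.
    destruct Hb as [L [t [HL [Hd Hfm]]]]. exists L, t. split; [lia|]. split; auto.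
    rewrite firstn_firstn in Hd. replace (Init.Nat.min L N) with L in Hd by lia. auto.
  - rewrite <- (firstn_skipn N g). apply shift; auto.
Qed.

Definition ivlen (p : R * R) : R := snd p - fst p.
Definition ivs_sum (l : list (R * R)) : R := fold_right (fun p acc => ivlen p + acc) 0 l.

Lemma sum_nth (l : list (R * R)) n : (length l <= S n)%nat ->
  sum_f_R0 (fun k => ivlen (nth k l (0, 0))) n = ivs_sum l.
Proof.
  revert n; induction l as [|x l IH]; intros n Hn.
  - simpl. induction n; simpl; [unfold ivlen; simpl; ring|]. rewrite IHn by (simpl; lia). unfold ivlen; simpl; ring.
  - destruct n as [|n].
    + simpl in Hn. destruct l; [|simpl in Hn; lia]. simpl. ring.
    + rewrite decomp_sum by lia. simpl pred. simpl nth. rewrite IH by (simpl in Hn; lia). simpl. ring.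
Qed.

Lemma finite_cover (A : R -> Prop) (l : list (R * R)) :
  Forall (fun p => fst p <= snd p) l -> (forall s, A s -> exists p, In p l /\ fst p < s < snd p) ->
  interval_cover A (fun k => fst (nth k l (0, 0))) (fun k => snd (nth k l (0, 0))) /\
  infinite_sum (fun k => snd (nth k l (0, 0)) - fst (nth k l (0, 0))) (ivs_sum l).
Proof.
  intros Hf Hc. split; [split|].
  - intros k. destruct (Nat.lt_ge_cases k (length l)).
    + rewrite Forall_forall in Hf. apply Hf, nth_In; auto.
    + rewrite nth_overflow by auto. simpl; lra.
  - intros s Hs. destruct (Hc s Hs) as [p [Hp Hs']]. destruct (In_nth l p (0,0) Hp) as [k [_ Hk]].
    exists k. rewrite Hk; auto.
  - intros eps Heps. exists (length l). intros n Hn.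
    change (fun k => snd (nth k l (0, 0)) - fst (nth k l (0, 0))) with (fun k => ivlen (nth k l (0, 0))).
    rewrite sum_nth by lia. unfold R_dist. rewrite Rminus_diag, Rabs_R0; lra.
Qed.

Lemma mge_finite (A : R -> Prop) m l :
  measure_ge A m -> Forall (fun p => fst p <= snd p) l ->
  (forall s, A s -> exists p, In p l /\ fst p < s < snd p) -> m <= ivs_sum l.
Proof.
  intros H Hf Hc. destruct (finite_cover A l Hf Hc) as [H1 H2]. eapply H; eauto.
Qed.

Lemma mle_finite (A : R -> Prop) m l :
  Forall (fun p => fst p <= snd p) l ->
  (forall s, A s -> exists p, In p l /\ fst p < s < snd p) -> ivs_sum l <= m -> measure_le A m.
Proof.
  intros Hf Hc Hs eps Heps. destruct (finite_cover A l Hf Hc) as [H1 H2].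
  do 3 eexists. split; [eauto|]. split; [eauto|]. lra.
Qed.

Lemma list_choice {A B} (l : list A) (P : A -> Prop) (Q : A -> B -> Prop) :
  (forall x, In x l -> P x -> exists y, Q x y) ->
  exists ys, (forall y, In y ys -> exists x, In x l /\ Q x y) /\
             forall x, In x l -> P x -> exists y, In y ys /\ Q x y.
Proof.
  induction l as [|a l IH]; intros H.
  - exists nil. split; intros ? [].
  - destruct IH as [ys [H1 H2]]. { intros; apply H; simpl; auto. }
    destruct (classic (P a)) as [Pa|nPa].
    + destruct (H a (or_introl eq_refl) Pa) as [y Hy]. exists (y :: ys). split.
      * intros y' [<-|Hy']; [exists a; split; [left|]; auto|]. destruct (H1 y' Hy') as [x [? ?]]; exists x; split; [right|]; auto.
      * intros x [<-|Hx] Px; [exists y; split; [left|]; auto|]. destruct (H2 x Hx Px) as [y' [? ?]]; exists y'; split; [right|]; auto.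
    + exists ys. split.
      * intros y' Hy'. destruct (H1 y' Hy') as [x [? ?]]; exists x; split; [right|]; auto.
      * intros x [<-|Hx] Px; [contradiction|]. apply H2; auto.
Qed.

Lemma fold_max_in l : fold_right Nat.max 0%nat l = 0%nat \/ In (fold_right Nat.max 0%nat l) l.
Proof.
  induction l as [|a l IH]; simpl; auto. right.
  destruct (Nat.max_spec a (fold_right Nat.max 0%nat l)) as [[_ E]|[_ E]]; rewrite E.
  - destruct IH as [IH|IH]; [rewrite IH in *; lia|auto].
  - auto.
Qed.

Lemma fstar_witness N th s K : 1 <= K -> K <= INR (fstar N th s) ->
  exists n, (n <= N)%nat /\ K <= INR (fmult n th s).
Proof.
  intros HK H. unfold fstar in H.
  destruct (fold_max_in (map (fun n => fmult n th s) (seq 0 (S N)))) as [E|E].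
  - rewrite E in H. simpl in H. lra.
  - apply in_map_iff in E as [n [En Hn]]. apply in_seq in Hn. exists n. split; [lia|]. rewrite En; auto.
Qed.

Lemma fmult_pos_witness n th s : (1 <= fmult n th s)%nat ->
  exists al, In al (alphas n) /\ Rabs (cp th al - s) < r n.
Proof.
  rewrite fmult_cnt. unfold cnt. intros H.
  destruct (filter (fun al => ltb (Rabs (cp th al - s)) (r n)) (alphas n)) as [|al l] eqn:E; [simpl in H; lia|].
  assert (In al (filter (fun al => ltb (Rabs (cp th al - s)) (r n)) (alphas n))) by (rewrite E; left; auto).
  apply filter_In in H0 as [H1 H2]. apply ltb_true in H2. eauto.
Qed.

Lemma projG_cover M th s : projG M th s -> exists g, In g (alphas M) /\ Rabs (s - cp th g) < r M.
Proof.
  intros [x [y [[al [Hin Hd]] ->]]]. exists al. split; auto.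
  pose proof (proj_sq th (x - zre al) (y - zim al)).
  replace (proj th x y - cp th al) with (proj th (x - zre al) (y - zim al)) by (unfold cp, proj; ring).
  set (p := proj th (x - zre al) (y - zim al)) in *. fold (r M) in Hd. pose proof (r_pos M).
  assert (p^2 < (r M)^2) by lra.
  unfold Rabs; destruct Rcase_abs; nra.
Qed.

Lemma bern x m : 0 <= x <= 1 -> (1 - x) ^ m * (1 + INR m * x) <= 1.
Proof.
  intros Hx. induction m as [|m IH]; [simpl; lra|].
  rewrite S_INR. simpl pow.
  assert (0 <= (1 - x) ^ m) by (apply pow_le; lra).
  assert ((1 - x) * (1 + (INR m + 1) * x) <= 1 + INR m * x).
  { pose proof (pos_INR m). nra. }
  nra.
Qed.

Lemma INR3 n : INR (3 ^ n) = 3 ^ n.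
Proof. rewrite pow_INR. replace (INR 3) with 3 by (simpl; ring). auto. Qed.

Lemma r3 n : 3 ^ n * r n = 1.
Proof. unfold r. rewrite <- Rpow_mult_distr. replace (3 * / 3) with 1 by field. apply pow1. Qed.

Lemma pow3 n D : (n <= D)%nat -> 3 ^ D * r n = INR (3 ^ (D - n)).
Proof.
  intros H. rewrite INR3. replace D with (n + (D - n))%nat at 1 by lia. rewrite pow_add.
  replace (3 ^ n * 3 ^ (D - n) * r n) with ((3 ^ n * r n) * 3 ^ (D - n)) by ring. rewrite r3; ring.
Qed.

Definition sumr (ws : list W) : R := fold_right (fun w acc => r (snd w) + acc) 0 ws.

Lemma sumc_ge th K D ws : 0 <= K ->
  (forall w, In w ws -> (snd w <= D)%nat /\ K <= INR (fmult (snd w) th (fst w))) ->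
  K * 3 ^ D * sumr ws <= INR (sumc th D ws).
Proof.
  intros HK. induction ws as [|w ws IH]; intros H; simpl; [lra|].
  rewrite plus_INR, mult_INR. destruct (H w (or_introl eq_refl)) as [H1 H2].
  rewrite <- (pow3 _ _ H1). pose proof (IH (fun w' Hw' => H w' (or_intror Hw'))).
  pose proof (r_pos (snd w)). pose proof (pow_lt 3 D ltac:(lra)).
  assert (K * (3 ^ D * r (snd w)) <= INR (fmult (snd w) th (fst w)) * (3 ^ D * r (snd w))).
  { apply Rmult_le_compat_r; auto. left; apply Rmult_lt_0_compat; auto. }
  nra.
Qed.

Definition big_iv (w : W) : R * R := (fst w - 6 * r (snd w), fst w + 6 * r (snd w)).

Lemma ivs_big ws : ivs_sum (map big_iv ws) = 12 * sumr ws.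
Proof. induction ws; simpl; [ring|]. rewrite IHws. unfold ivlen, big_iv; simpl. ring. Qed.

Lemma ivs_app l1 l2 : ivs_sum (l1 ++ l2) = ivs_sum l1 + ivs_sum l2.
Proof. induction l1; simpl; [ring|]. rewrite IHl1; ring. Qed.

Lemma big_ok ws : Forall (fun p => fst p <= snd p) (map big_iv ws).
Proof. apply Forall_forall. intros p Hp. apply in_map_iff in Hp as [w [<- _]]. unfold big_iv; simpl. pose proof (r_pos (snd w)); lra. Qed.

Lemma big_in w x : big w x -> fst (big_iv w) < x < snd (big_iv w).
Proof. unfold big, big_iv; simpl. intros H. unfold Rabs in H; destruct Rcase_abs; lra. Qed.

Lemma ceil_ge x : 0 < x -> x <= INR (Z.to_nat (ceilR x)).
Proof.
  intros Hx. unfold ceilR. destruct (base_Int_part (- x)) as [H1 H2].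
  assert (Hz : (0 <= - Int_part (- x))%Z).
  { assert (IZR (Int_part (-x)) < 0) by lra. apply lt_IZR in H. lia. }
  rewrite INR_IZR_INZ, Z2Nat.id by auto. rewrite opp_IZR. lra.
Qed.

Definition nodes (N : nat) : list (nat * list Z) :=
  flat_map (fun n => map (fun al => (n, al)) (alphas n)) (seq 0 (S N)).

Lemma partA N th K m0 : 1 <= K ->
  measure_ge (fun s => K <= INR (fstar N th s)) m0 ->
  m0 * K <= 12 * (INR (cnt N (fun d => dec (good_at th K N d))) * r N).
Proof.
  intros HK Hm.
  destruct (list_choice (nodes N)
    (fun x => exists t, Rabs (cp th (snd x) - t) < r (fst x) /\ K <= INR (fmult (fst x) th t))
    (fun x w => snd w = fst x /\ (fst x <= N)%nat /\ Rabs (cp th (snd x) - fst w) < r (fst x) /\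
                K <= INR (fmult (fst x) th (fst w))))
    as [wsA [HA1 HA2]].
  { intros [n al] Hx [t [H1 H2]]. exists (t, n). simpl.
    unfold nodes in Hx. apply in_flat_map in Hx as [n' [Hn' Hx]]. apply in_map_iff in Hx as [al' [E _]].
    inversion E; subst. apply in_seq in Hn'. repeat split; auto; lia. }
  destruct (vitali wsA) as [sel [Hincl [Hpw Hcov]]].
  assert (Hsel : forall w, In w sel -> (snd w <= N)%nat /\ K <= INR (fmult (snd w) th (fst w))).
  { intros w Hw. apply Hincl, HA1 in Hw as [x [_ [E [H1 [_ H2]]]]]. rewrite E; auto. }
  assert (H1 : m0 <= 12 * sumr sel).
  { rewrite <- ivs_big. apply (mge_finite _ _ _ Hm (big_ok sel)).
    intros s Hs. destruct (fstar_witness N th s K HK Hs) as [n [Hn Hf]].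
    assert (Hf1 : (1 <= fmult n th s)%nat) by (apply INR_le; simpl; lra).
    destruct (fmult_pos_witness n th s Hf1) as [al [Hal Hd]].
    assert (Hnode : In (n, al) (nodes N)).
    { unfold nodes. apply in_flat_map. exists n. split; [apply in_seq; lia|]. apply in_map; auto. }
    destruct (HA2 (n, al) Hnode) as [w [Hw [E [_ [H3 _]]]]].
    { exists s. simpl. split; auto. }
    simpl in *. destruct (Hcov w s Hw) as [w' [Hw' Hb]].
    { unfold ball. rewrite E. pose proof (Rabs_triang (s - cp th al) (cp th al - fst w)).
      replace (s - cp th al + (cp th al - fst w)) with (s - fst w) in H by ring.
      rewrite <- Rabs_Ropp in Hd. replace (- (cp th al - s)) with (s - cp th al) in Hd by ring. lra. }
    exists (big_iv w'). split; [apply in_map; auto|]. apply big_in; auto. }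
  assert (H2 : K * 3 ^ N * sumr sel <= INR (cnt N (fun d => dec (good_at th K N d)))).
  { eapply Rle_trans; [apply (sumc_ge th K N sel); auto; lra|].
    rewrite <- count_union; auto.
    - apply le_INR, cnt_mono. intros d Hd Hex. apply existsb_exists in Hex as [w [Hw Hwin]].
      apply dec_true. destruct (Hsel w Hw) as [Hn Hf]. exists (snd w), (fst w). split; auto. split; auto.
      unfold winb in Hwin. apply ltb_true in Hwin; auto.
    - apply Forall_forall. intros w Hw; apply Hsel; auto. }
  pose proof (r3 N) as Hr3.
  assert (0 <= sumr sel). { clear. induction sel; simpl; [lra|]. pose proof (r_pos (snd a)); lra. }
  pose proof (r_pos N).
  assert (K * sumr sel <= INR (cnt N (fun d => dec (good_at th K N d))) * r N).
  { assert (E : K * 3 ^ N * sumr sel * r N = K * sumr sel * (3 ^ N * r N)) by ring.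
    rewrite Hr3, Rmult_1_r in E. rewrite <- E. apply Rmult_le_compat_r; lra. }
  nra.
Qed.

Definition bad_iv th M (g : list Z) : R * R := (cp th g - r M, cp th g + r M).

Lemma ivs_bad th M gs : ivs_sum (map (bad_iv th M) gs) = INR (length gs) * (2 * r M).
Proof.
  induction gs; simpl length; [simpl; ring|]. simpl map. simpl ivs_sum. rewrite IHgs, S_INR.
  unfold ivlen, bad_iv; simpl. ring.
Qed.

Lemma partB N m th K : 1 <= K ->
  measure_le (projG (N * m) th)
    (12 * / K + 2 * (INR (cnt N (notsucc th K N)) * r N) ^ m).
Proof.
  intros HK. set (M := (N * m)%nat).
  destruct (list_choice (alphas M) (good_at th K M)
    (fun g w => (snd w <= M)%nat /\ Rabs (cp th (firstn (snd w) g) - fst w) < r (snd w) /\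
                K <= INR (fmult (snd w) th (fst w))))
    as [wsU [HU1 HU2]].
  { intros g _ [L [t [H1 [H2 H3]]]]. exists (t, L); simpl; auto. }
  destruct (vitali wsU) as [sel [Hincl [Hpw Hcov]]].
  assert (Hsel : forall w, In w sel -> (snd w <= M)%nat /\ K <= INR (fmult (snd w) th (fst w))).
  { intros w Hw. apply Hincl, HU1 in Hw as [x [_ [H1 [_ H2]]]]. auto. }
  set (bads := filter (blocksOK th K N m) (alphas M)).
  apply (mle_finite _ _ (map big_iv sel ++ map (bad_iv th M) bads)).
  - apply Forall_app; split; [apply big_ok|]. apply Forall_forall. intros p Hp.
    apply in_map_iff in Hp as [g [<- _]]. unfold bad_iv; simpl. pose proof (r_pos M); lra.
  - intros s Hs. destruct (projG_cover M th s Hs) as [g [Hg Hd]].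
    destruct (blocksOK th K N m g) eqn:Eb.
    + exists (bad_iv th M g). split.
      * apply in_or_app; right. apply in_map. unfold bads. apply filter_In; auto.
      * unfold bad_iv; simpl. unfold Rabs in Hd; destruct Rcase_abs; lra.
    + pose proof (blocks_good th K N m g Hg Eb) as Hgood.
      destruct (HU2 g Hg Hgood) as [w [Hw [HL [H1 _]]]].
      destruct (Hcov w s Hw) as [w' [Hw' Hb]].
      { unfold ball. set (L := snd w) in *.
        pose proof (nested th (firstn L g) (skipn L g)). rewrite firstn_skipn in H.
        apply alphas_length in Hg as Hlg. rewrite Hlg, length_firstn in H.
        replace (Init.Nat.min L (length g)) with L in H by lia.
        pose proof (Rabs_triang (s - cp th g) (cp th g - cp th (firstn L g))).
        pose proof (Rabs_triang (s - cp th g + (cp th g - cp th (firstn L g))) (cp th (firstn L g) - fst w)).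
        replace (s - cp th g + (cp th g - cp th (firstn L g)) + (cp th (firstn L g) - fst w)) with (s - fst w) in H2 by ring.
        lra. }
      exists (big_iv w'). split; [apply in_or_app; left; apply in_map; auto|]. apply big_in; auto.
  - rewrite ivs_app, ivs_big, ivs_bad.
    assert (H1 : sumr sel <= / K).
    { assert (K * 3 ^ M * sumr sel <= 3 ^ M).
      { eapply Rle_trans; [apply (sumc_ge th K M sel); auto; lra|].
        rewrite <- count_union; auto.
        - rewrite <- INR3. apply le_INR, cnt_le.
        - apply Forall_forall. intros w Hw; apply Hsel; auto. }
      pose proof (pow_lt 3 M ltac:(lra)).
      apply (Rmult_le_reg_l K); [lra|]. rewrite Rinv_r by lra. nra. }
    assert (H2 : INR (length bads) * r M = (INR (cnt N (notsucc th K N)) * r N) ^ m).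
    { unfold bads. fold (cnt M (blocksOK th K N m)). unfold M. rewrite cnt_blocks.
      rewrite pow_INR, Rpow_mult_distr. unfold r. rewrite pow_mult. auto. }
    replace (INR (length bads) * (2 * r M)) with (2 * (INR (length bads) * r M)) by ring.
    rewrite H2. lra.
Qed.

Lemma mle_mono A m1 m2 : measure_le A m1 -> m1 <= m2 -> measure_le A m2.
Proof.
  intros H Hm eps Heps. destruct (H eps Heps) as [a [b [L [H1 [H2 H3]]]]].
  exists a, b, L. split; [auto|]. split; [auto|]. lra.
Qed.

Theorem theorem7 (beta : R) (hbeta : 2 < beta) :
  exists C : R, forall (N : nat) (theta K : R),
    (1 <= N)%nat -> 0 <= theta < PI -> 1 <= K ->
    measure_ge (fun s => K <= INR (fstar N theta s)) (Rpower K (- beta)) ->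
    measure_le (projG (N * Z.to_nat (ceilR (Rpower K beta))) theta) (C / K).
Proof.
  exists 36. intros N th K HN Hth HK Hm.
  set (m := Z.to_nat (ceilR (Rpower K beta))).
  pose proof (partA N th K _ HK Hm) as HA.
  set (Sg := cnt N (fun d => dec (good_at th K N d))) in *.
  set (T := cnt N (notsucc th K N)).
  assert (HST : (Sg + T)%nat = (3 ^ N)%nat).
  { unfold Sg, T, cnt. rewrite <- length_alphas. apply filter_compl. }
  set (x := INR Sg * r N) in *.
  assert (HT : INR T * r N = 1 - x).
  { unfold x. rewrite <- (r3 N), <- INR3, <- HST, plus_INR. ring. }
  assert (Hx : 0 <= x <= 1).
  { unfold x. pose proof (r_pos N). pose proof (pos_INR Sg). pose proof (pos_INR T). split; [nra|].
    pose proof (r3 N). rewrite <- INR3, <- HST, plus_INR in H2. nra. }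
  assert (Hm1 : Rpower K beta <= INR m) by (apply ceil_ge; unfold Rpower; apply exp_pos).
  assert (Hpp : Rpower K beta * Rpower K (- beta) = 1).
  { rewrite <- Rpower_plus. replace (beta + - beta) with 0 by ring. apply Rpower_O; lra. }
  assert (Hmx : K / 12 <= INR m * x).
  { assert (0 < Rpower K (- beta)) by (unfold Rpower; apply exp_pos).
    assert (0 < Rpower K beta) by (unfold Rpower; apply exp_pos).
    assert (K / 12 = Rpower K beta * (Rpower K (- beta) * K / 12)).
    { replace (Rpower K beta * (Rpower K (- beta) * K / 12)) with ((Rpower K beta * Rpower K (- beta)) * K / 12).
      2:{ unfold Rdiv. ring. }
      rewrite Hpp. field. }
    rewrite H1. assert (0 <= Rpower K (- beta) * K / 12) by (unfold Rdiv; apply Rmult_le_pos; [apply Rmult_le_pos|]; lra). apply Rmult_le_compat; lra. }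
  pose proof (bern x m Hx) as Hb.
  assert (Hq : (1 - x) ^ m <= 12 / K).
  { assert (0 <= (1 - x) ^ m) by (apply pow_le; lra).
    assert ((1 - x) ^ m * (K / 12) <= 1) by nra.
    apply (Rmult_le_reg_r (K / 12)); [lra|]. replace (12 / K * (K / 12)) with 1 by (field; lra). auto. }
  eapply mle_mono; [apply (partB N m th K HK)|]. fold T. rewrite HT.
  replace (36 / K) with (12 * / K + 2 * (12 / K)) by (field; lra). lra.
Qed.
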